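(* Let $\mathcal T$ be $\Lambda$-admissible. For all $E\in\mathcal T$, $$\sum_{\boldsymbol x\in\mathcal H_E}d^2(v,\boldsymbol x)\lesssim|v-\mathcal I_Ev|^2_{1,E}\lesssim\sum_{\boldsymbol x\in\mathcal H_E}d^2(v,\boldsymbol x)\qquad\forall v\in\mathbb V_E,$$ with hidden constants depending only on $\Lambda$ (and on $\mathcal T_0$, $c_s$, $C_s$), not on $E$ or $\mathcal T$.
   Context: Setting. $\Omega\subset\mathbb R^2$ polygonal, $\mathcal T_0$ a fixed conforming triangulation; $\mathcal T$ is obtained by finitely many newest-vertex bisections (possibly with hanging nodes). Nodes are vertices of triangles of $\mathcal T$; a hanging node $\boldsymbol z$ was created as the midpoint of an edge of a triangle of an earlier partition, whose endpoints are denoted $\boldsymbol z',\boldsymbol z''$. Global index: $0$ at proper nodes (vertices of all triangles containing them), $\max(\lambda(\boldsymbol z'),\lambda(\boldsymbol z''))+1$ at hanging nodes; $\Lambda$-admissible means all indices $\le\Lambda$. For $E\in\mathcal T$: $\mathcal N_E$ = nodes on $\partial E$, $\mathcal V_E$ = the three vertices of $E$, $\mathcal H_E=\mathcal N_E\setminus\mathcal V_E$. $\mathbb V_E\subset C^0(\overline E)\cap H^1(E)$: dimension $|\mathcal N_E|$, contains $\mathbb P_1(E)$, traces exactly the continuous functions on $\partial E$ affine between consecutive nodes of $\mathcal N_E$. Stability assumption: with $s_E(v,w)=\sum_{\boldsymbol x\in\mathcal N_E}v(\boldsymbol x)w(\boldsymbol x)$, $c_s|w|^2_{1,E}\le s_E(w,w)\le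 C_s|w|^2_{1,E}$ for all $w\in\mathbb V_E$ vanishing at $\mathcal V_E$. $\mathcal I_E$: Lagrange interpolation into $\mathbb P_1(E)$ at $\mathcal V_E$. Hierarchical details: $d(v,\boldsymbol z)=v(\boldsymbol z)$ for $\boldsymbol z\in\mathcal V_E$, and $d(v,\boldsymbol z)=v(\boldsymbol z)-\frac12(v(\boldsymbol z')+v(\boldsymbol z''))$ for $\boldsymbol z\in\mathcal H_E$. *)

(* Defs.v *)
From HB Require Import structures.
From mathcomp Require Import all_boot all_order all_algebra.
From mathcomp Require Import all_classical all_reals all_analysis.
Set Implicit Arguments. Unset Strict Implicit. Unset Printing Implicit Defensive.
Import Order.TTheory GRing.Theory Num.Theory.
Import numFieldNormedType.Exports.
Local Open Scope classical_set_scope.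
Local Open Scope ring_scope.

Section Mesh.
Variable R : realType.

Definition pt2 := (R * R)%type.

(* A labelled triangle (z0, a, b): z0 is the newest vertex, [a,b] the
   refinement edge (the edge opposite the newest vertex). *)
Definition tri := (pt2 * pt2 * pt2)%type.

Definition newest (K : tri) : pt2 := K.1.1.
Definition redge1 (K : tri) : pt2 := K.1.2.
Definition redge2 (K : tri) : pt2 := K.2.
Definition vertices (K : tri) : seq pt2 := [:: newest K; redge1 K; redge2 K].

Definition midpoint (a b : pt2) : pt2 := ((a.1 + b.1) / 2, (a.2 + b.2) / 2).

Definition comb3 (l1 l2 l3 : R) (p q r : pt2) : pt2 :=
  (l1 * p.1 + l2 * q.1 + l3 * r.1, l1 * p.2 + l2 * q.2 + l3 * r.2).

Definition closedT (K : tri) : set pt2 :=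
  [set x | exists l1 l2 l3 : R, [/\ 0 <= l1, 0 <= l2, 0 <= l3, l1 + l2 + l3 = 1 &
     x = comb3 l1 l2 l3 (newest K) (redge1 K) (redge2 K)]].

Definition openT (K : tri) : set pt2 :=
  [set x | exists l1 l2 l3 : R, [/\ 0 < l1, 0 < l2, 0 < l3, l1 + l2 + l3 = 1 &
     x = comb3 l1 l2 l3 (newest K) (redge1 K) (redge2 K)]].

Definition bdT (K : tri) : set pt2 := closedT K `\` openT K.

Definition det2 (u v : pt2) : R := u.1 * v.2 - u.2 * v.1.
Definition psub (u v : pt2) : pt2 := (u.1 - v.1, u.2 - v.2).

Definition nondegenerate (K : tri) : Prop :=
  det2 (psub (redge1 K) (newest K)) (psub (redge2 K) (newest K)) != 0.

Definition segment (a b : pt2) : set pt2 :=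
  [set x | exists t : R, [/\ 0 <= t, t <= 1 & x = comb3 (1 - t) t 0 a b b]].
Definition osegment (a b : pt2) : set pt2 :=
  [set x | exists t : R, [/\ 0 < t, t < 1 & x = comb3 (1 - t) t 0 a b b]].

Definition conv (s : seq pt2) : set pt2 :=
  [set x | exists l : pt2 -> R, [/\ (forall p, p \in s -> 0 <= l p),
     \sum_(p <- undup s) l p = 1 &
     x = (\sum_(p <- undup s) l p * p.1, \sum_(p <- undup s) l p * p.2)]].

Definition conforming (T : seq tri) : Prop :=
  [/\ uniq T, (forall K, K \in T -> nondegenerate K) &
      forall K K', K \in T -> K' \in T -> K != K' ->
        openT K `&` openT K' = set0 /\
        closedT K `&` closedT K' = conv [seq p <- vertices K | p \in vertices K']].

(* newest-vertex bisection of K = (z0, a, b): m = midpoint of [a,b] becomes the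
   newest vertex of both children, whose refinement edges are [z0,a], [z0,b]. *)
Definition children (K : tri) : seq tri :=
  let m := midpoint (redge1 K) (redge2 K) in
  [:: (m, newest K, redge1 K); (m, newest K, redge2 K)].

Definition bisect (T : seq tri) (K : tri) : seq tri := children K ++ rem K T.

Inductive refines (T1 : seq tri) : seq tri -> Prop :=
  | refines0 : refines T1 T1
  | refinesS T K : refines T1 T -> K \in T -> refines T1 (bisect T K).

Definition nodes (T : seq tri) : seq pt2 := undup (flatten (map vertices T)).

Definition proper_node (T : seq tri) (z : pt2) : Prop :=
  forall K, K \in T -> closedT K z -> z \in vertices K.

Definition parent_pair (T0 T : seq tri) (z z' z'' : pt2) : Prop :=
  exists T' K, [/\ refines T0 T', K \in T', refines (bisect T' K) T &
    [/\ z' = redge1 K, z'' = redge2 K & z = midpoint z' z'']].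

Definition parents (T0 T : seq tri) (z : pt2) : pt2 * pt2 :=
  match pselect (exists pr : pt2 * pt2, parent_pair T0 T z pr.1 pr.2) with
  | left H => projT1 (cid H)
  | right _ => (z, z)
  end.

(* global index: idx_le T0 T z n  <->  lambda(z) <= n, where lambda(z) = 0 at
   proper nodes and lambda(z) = max(lambda(z'), lambda(z'')) + 1 at hanging
   nodes with parents z', z''. *)
Inductive idx_le (T0 T : seq tri) : pt2 -> nat -> Prop :=
  | idx_proper z n : proper_node T z -> idx_le T0 T z n
  | idx_hanging z n : ~ proper_node T z ->
      idx_le T0 T (parents T0 T z).1 n -> idx_le T0 T (parents T0 T z).2 n ->
      idx_le T0 T z n.+1.

Definition admissible (Lambda : nat) (T0 T : seq tri) : Prop :=
  forall z, z \in nodes T -> idx_le T0 T z Lambda.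

Definition NE (T : seq tri) (E : tri) : seq pt2 :=
  [seq x <- nodes T | `[< bdT E x >]].
Definition HE (T : seq tri) (E : tri) : seq pt2 :=
  [seq x <- NE T E | x \notin vertices E].

Definition detail (T0 T : seq tri) (E : tri) (v : pt2 -> R) (z : pt2) : R :=
  if z \in vertices E then v z
  else v z - (v (parents T0 T z).1 + v (parents T0 T z).2) / 2.

Definition interpP1 (E : tri) (v : pt2 -> R) : pt2 -> R :=
  fun x =>
    let a := newest E in let b := redge1 E in let c := redge2 E in
    let D := det2 (psub b a) (psub c a) in
    let lb := det2 (psub x a) (psub c a) / D in
    let lc := det2 (psub b a) (psub x a) / D in
    (1 - lb - lc) * v a + lb * v b + lc * v c.

Definition affine (f : pt2 -> R) : Prop :=
  exists a b c : R, forall x, f x = a + b * x.1 + c * x.2.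

Definition consecutive (T : seq tri) (E : tri) (x y : pt2) : Prop :=
  [/\ x \in NE T E, y \in NE T E, x != y,
      exists a b, [/\ a \in vertices E, b \in vertices E,
                      segment a b x & segment a b y] &
      forall z, z \in NE T E -> ~ osegment x y z].

Definition pw_affine_bd (T : seq tri) (E : tri) (g : pt2 -> R) : Prop :=
  {within bdT E, continuous g} /\
  forall x y, consecutive T E x y -> forall t : R, 0 <= t -> t <= 1 ->
    g (comb3 (1 - t) t 0 x y y) = (1 - t) * g x + t * g y.

Definition leb2 := ((@lebesgue_measure R) \x (@lebesgue_measure R))%E.

Definition d1 (f : pt2 -> R) (p : pt2) : R := derive1 (fun t => f (t, p.2)) p.1.
Definition d2 (f : pt2 -> R) (p : pt2) : R := derive1 (fun t => f (p.1, t)) p.2.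

Definition test_fun (U : set pt2) (phi : pt2 -> R) : Prop :=
  [/\ continuous phi,
      (forall p : pt2, derivable (fun t => phi (t, p.2)) p.1 1 /\
                         derivable (fun t => phi (p.1, t)) p.2 1),
      continuous (d1 phi), continuous (d2 phi) &
      exists C : set pt2, [/\ compact C, C `<=` U & forall p, ~ C p -> phi p = 0]].

Definition weak_grad (E : tri) (v g1 g2 : pt2 -> R) : Prop :=
  [/\ measurable_fun (openT E) g1, measurable_fun (openT E) g2,
      leb2.-integrable (openT E) (fun x => (g1 x ^+ 2)%:E),
      leb2.-integrable (openT E) (fun x => (g2 x ^+ 2)%:E) &
      forall phi, test_fun (openT E) phi ->
        Rintegral leb2 (openT E) (fun x => v x * d1 phi x) =
          - Rintegral leb2 (openT E) (fun x => g1 x * phi x) /\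
        Rintegral leb2 (openT E) (fun x => v x * d2 phi x) =
          - Rintegral leb2 (openT E) (fun x => g2 x * phi x)].

Definition in_H1 (E : tri) (v : pt2 -> R) : Prop :=
  measurable_fun (openT E) v /\
  leb2.-integrable (openT E) (fun x => (v x ^+ 2)%:E) /\
  exists g1 g2, weak_grad E v g1 g2.

Definition H1_semi2 (E : tri) (v : pt2 -> R) (r : R) : Prop :=
  exists g1 g2, weak_grad E v g1 g2 /\
    r = Rintegral leb2 (openT E) (fun x => g1 x ^+ 2 + g2 x ^+ 2).

(* the local space V_E (functions compared on \overline{E}) *)
Definition local_space (T : seq tri) (E : tri) (VE : (pt2 -> R) -> Prop) : Prop :=
  [/\
      [/\ VE (fun _ => 0),
          (forall u w, VE u -> VE w -> VE (fun x => u x + w x)) &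
          (forall (c : R) u, VE u -> VE (fun x => c * u x))],
      (exists b : 'I_(size (NE T E)) -> pt2 -> R,
         [/\ forall i, VE (b i),
             forall v, VE v -> exists c : 'I_(size (NE T E)) -> R,
               forall x, closedT E x -> v x = \sum_i c i * b i x &
             forall c : 'I_(size (NE T E)) -> R,
               (forall x, closedT E x -> \sum_i c i * b i x = 0) ->
               forall i, c i = 0]),
      (forall v, VE v -> {within closedT E, continuous v} /\ in_H1 E v),
      (forall f, affine f -> VE f) &
      ((forall v, VE v -> pw_affine_bd T E v) /\
       (forall g, pw_affine_bd T E g ->
          exists v, VE v /\ forall x, bdT E x -> v x = g x))].

Definition stable (T : seq tri) (E : tri) (VE : (pt2 -> R) -> Prop)
  (cs Cs : R) : Prop :=
  forall w, VE w -> (forall z, z \in vertices E -> w z = 0) ->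
    forall r, H1_semi2 E w r ->
      cs * r <= \sum_(x <- NE T E) w x ^+ 2 /\
      \sum_(x <- NE T E) w x ^+ 2 <= Cs * r.

End Mesh.

(* Main.v *)
Require Import Defs.
From HB Require Import structures.
From mathcomp Require Import all_boot all_order all_algebra.
From mathcomp Require Import all_classical all_reals all_analysis.
From mathcomp Require Import ring lra zify.
Import Order.TTheory GRing.Theory Num.Theory.
Local Open Scope ring_scope.
Set Implicit Arguments. Unset Strict Implicit. Unset Printing Implicit Defensive.


Section G.
Variable R : realType.
Implicit Types (K F E : tri R) (p q z : pt2 R).

Definition Dt K := det2 (psub (redge1 K) (newest K)) (psub (redge2 K) (newest K)).
Definition bc1 K p := det2 (psub p (newest K)) (psub (redge2 K) (newest K)) / Dt K.
Definition bc2 K p := det2 (psub (redge1 K) (newest K)) (psub p (newest K)) / Dt K.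
Definition bc0 K p := 1 - bc1 K p - bc2 K p.
Definition lerp p q (t : R) : pt2 R := (p.1 + t * (q.1 - p.1), p.2 + t * (q.2 - p.2)).

Lemma bc_comb K p : Dt K != 0 -> p = comb3 (bc0 K p) (bc1 K p) (bc2 K p) (newest K) (redge1 K) (redge2 K).
Proof.
move=> hD; move: hD; rewrite /bc0 /bc1 /bc2 /Dt /comb3 /det2 /psub.
case: p => p1 p2; case: K => [[[z1 z2] [a1 a2]] [b1 b2]] /= hD.
congr (_, _); field; done.
Qed.

Lemma aff_bc1 K : affine (bc1 K).
Proof.
rewrite /bc1 /det2 /psub; set D := Dt K.
exists ((- (newest K).1 * ((redge2 K).2 - (newest K).2) + (newest K).2 * ((redge2 K).1 - (newest K).1)) / D).
exists (((redge2 K).2 - (newest K).2) / D). exists (- ((redge2 K).1 - (newest K).1) / D).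
move=> x; rewrite /=; ring.
Qed.

Lemma aff_bc2 K : affine (bc2 K).
Proof.
rewrite /bc2 /det2 /psub; set D := Dt K.
exists ((- ((redge1 K).1 - (newest K).1) * (newest K).2 + ((redge1 K).2 - (newest K).2) * (newest K).1) / D).
exists (- ((redge1 K).2 - (newest K).2) / D). exists (((redge1 K).1 - (newest K).1) / D).
move=> x; rewrite /=; ring.
Qed.

Lemma aff_bc0 K : affine (bc0 K).
Proof.
have [a1 [b1 [c1 h1]]] := aff_bc1 K; have [a2 [b2 [c2 h2]]] := aff_bc2 K.
exists (1 - a1 - a2), (- b1 - b2), (- c1 - c2) => x; rewrite /bc0 h1 h2; ring.
Qed.

Lemma aff_lerp g p q t : affine g -> g (lerp p q t) = (1 - t) * g p + t * g q.
Proof. by case=> a [b [c h]]; rewrite !h /lerp /=; ring. Qed.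

Lemma aff_comb3 g l0 l1 l2 p q r : affine g -> l0 + l1 + l2 = 1 ->
  g (comb3 l0 l1 l2 p q r) = l0 * g p + l1 * g q + l2 * g r.
Proof.
case=> a [b [c h]] hl; rewrite !h /comb3 /=.
have -> : l0 = 1 - l1 - l2 by rewrite -hl; ring.
ring.
Qed.

Lemma aff_mid g p q : affine g -> g (midpoint p q) = (g p + g q) / 2.
Proof. case=> a [b [c h]]; rewrite !h /midpoint /=; by field. Qed.


Lemma bcv K : Dt K != 0 ->
  [/\ [/\ bc0 K (newest K) = 1, bc1 K (newest K) = 0 & bc2 K (newest K) = 0],
      [/\ bc0 K (redge1 K) = 0, bc1 K (redge1 K) = 1 & bc2 K (redge1 K) = 0] &
      [/\ bc0 K (redge2 K) = 0, bc1 K (redge2 K) = 0 & bc2 K (redge2 K) = 1]].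
Proof.
rewrite /bc0 /bc1 /bc2 /Dt /det2 /psub.
case: K => [[[z1 z2] [a1 a2]] [b1 b2]] /= hD.
by split; split; field.
Qed.

Lemma bc_uniq K l0 l1 l2 : Dt K != 0 -> l0 + l1 + l2 = 1 ->
  let p := comb3 l0 l1 l2 (newest K) (redge1 K) (redge2 K) in
  [/\ bc0 K p = l0, bc1 K p = l1 & bc2 K p = l2].
Proof.
move=> hD hl /=; have [[h1 h2 h3] [h4 h5 h6] [h7 h8 h9]] := bcv hD.
rewrite !aff_comb3 //; [|exact: aff_bc2|exact: aff_bc1|exact: aff_bc0].
rewrite h1 h2 h3 h4 h5 h6 h7 h8 h9; split; ring.
Qed.

Lemma closedT_bc K p : Dt K != 0 ->
  Defs.closedT K p <-> [/\ 0 <= bc0 K p, 0 <= bc1 K p & 0 <= bc2 K p].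
Proof.
move=> hD; split.
  case=> l0 [l1 [l2 [h0 h1 h2 hs ->]]].
  by have [-> -> ->] := bc_uniq hD hs.
case=> h0 h1 h2; exists (bc0 K p), (bc1 K p), (bc2 K p); split => //.
  by rewrite /bc0; ring.
exact: bc_comb.
Qed.

Lemma openT_bc K p : Dt K != 0 ->
  Defs.openT K p <-> [/\ 0 < bc0 K p, 0 < bc1 K p & 0 < bc2 K p].
Proof.
move=> hD; split.
  case=> l0 [l1 [l2 [h0 h1 h2 hs ->]]].
  by have [-> -> ->] := bc_uniq hD hs.
case=> h0 h1 h2; exists (bc0 K p), (bc1 K p), (bc2 K p); split => //.
  by rewrite /bc0; ring.
exact: bc_comb.
Qed.

Lemma aff_collinear g q1 q2 k0 k1 k2 : affine g -> g q1 != g q2 ->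
  g k0 = 0 -> g k1 = 0 -> g k2 = 0 -> det2 (psub k1 k0) (psub k2 k0) = 0.
Proof.
case=> a [b [c h]]; rewrite !h => hne e0 e1 e2.
rewrite /det2 /psub /=.
have u1 : b * (k1.1 - k0.1) = - (c * (k1.2 - k0.2)).
  apply/eqP; rewrite -subr_eq0 opprK; apply/eqP.
  by rewrite -(subrr 0) -{1}e1 -e0; ring.
have u2 : b * (k2.1 - k0.1) = - (c * (k2.2 - k0.2)).
  apply/eqP; rewrite -subr_eq0 opprK; apply/eqP.
  by rewrite -(subrr 0) -{1}e2 -e0; ring.
set dd := (_ - _ * _).
have hb : b * dd = 0.
  have -> : b * dd = (b * (k1.1 - k0.1)) * (k2.2 - k0.2) - (k1.2 - k0.2) * (b * (k2.1 - k0.1)) by rewrite /dd; ring.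
  rewrite u1 u2; ring.
have hc : c * dd = 0.
  have -> : c * dd = (k1.1 - k0.1) * (c * (k2.2 - k0.2)) - (c * (k1.2 - k0.2)) * (k2.1 - k0.1) by rewrite /dd; ring.
  rewrite -[c * (k2.2 - k0.2)]opprK -[c * (k1.2 - k0.2)]opprK -u1 -u2; ring.
have : (b != 0) || (c != 0).
  apply: contraNT hne; rewrite negb_or !negbK => /andP [/eqP -> /eqP ->].
  by rewrite !mul0r !addr0.
by case/orP => hz; [move: hb|move: hc]; move/eqP; rewrite mulf_eq0 (negbTE hz) => /eqP.
Qed.


Definition sub_tri K F := forall q, q \in vertices K -> Defs.closedT F q.

Lemma bc_aff K : [/\ affine (bc0 K), affine (bc1 K) & affine (bc2 K)].
Proof. split; [exact: aff_bc0|exact: aff_bc1|exact: aff_bc2]. Qed.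

Lemma aff_pos_open K g p : Dt K != 0 -> affine g ->
  (exists q1 q2, g q1 != g q2) ->
  0 <= g (newest K) -> 0 <= g (redge1 K) -> 0 <= g (redge2 K) ->
  Defs.openT K p -> 0 < g p.
Proof.
move=> hD ha [q1 [q2 hq]] g0 g1 g2 [l0 [l1 [l2 [h0 h1 h2 hs ->]]]].
rewrite aff_comb3 //.
have [e0|n0] := eqVneq (g (newest K)) 0; last first.
  have : 0 < g (newest K) by rewrite lt_def n0 g0.
  move=> hp; have := mulr_gt0 h0 hp; have := mulr_ge0 (ltW h1) g1; have := mulr_ge0 (ltW h2) g2; lra.
have [e1|n1] := eqVneq (g (redge1 K)) 0; last first.
  have : 0 < g (redge1 K) by rewrite lt_def n1 g1.
  move=> hp; have := mulr_gt0 h1 hp; have := mulr_ge0 (ltW h0) g0; have := mulr_ge0 (ltW h2) g2; lra.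
have [e2|n2] := eqVneq (g (redge2 K)) 0; last first.
  have : 0 < g (redge2 K) by rewrite lt_def n2 g2.
  move=> hp; have := mulr_gt0 h2 hp; have := mulr_ge0 (ltW h1) g1; have := mulr_ge0 (ltW h0) g0; lra.
by have := aff_collinear ha hq e0 e1 e2; move/eqP: hD.
Qed.

Lemma bc_nonconst F : Dt F != 0 ->
  [/\ exists q1 q2, bc0 F q1 != bc0 F q2, exists q1 q2, bc1 F q1 != bc1 F q2 &
      exists q1 q2, bc2 F q1 != bc2 F q2].
Proof.
move=> hD; have [[h1 h2 h3] [h4 h5 h6] [h7 h8 h9]] := bcv hD.
split; [exists (newest F), (redge1 F); rewrite h1 h4
       |exists (redge1 F), (newest F); rewrite h5 h2
       |exists (redge2 F), (newest F); rewrite h9 h3]; exact: oner_neq0.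
Qed.

Lemma int_sub K F p : Dt K != 0 -> Dt F != 0 -> sub_tri K F ->
  Defs.openT K p -> Defs.openT F p.
Proof.
move=> hK hF hs hp; apply/(openT_bc _ hF).
have v0 := hs _ (mem_head _ _).
have v1 : Defs.closedT F (redge1 K) by apply: hs; rewrite !inE eqxx orbT.
have v2 : Defs.closedT F (redge2 K) by apply: hs; rewrite !inE eqxx !orbT.
move/(closedT_bc _ hF): v0 => [a0 a1 a2].
move/(closedT_bc _ hF): v1 => [b0 b1 b2].
move/(closedT_bc _ hF): v2 => [c0 c1 c2].
have [n0 n1 n2] := bc_nonconst hF.
have [x0 x1 x2] := bc_aff F; split; apply: (aff_pos_open hK) => //.
Qed.

Lemma small_pos (x y e : R) : 0 < x -> 0 < e -> e <= 1/2 ->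
  e * (2 * (`|y| + 1)) <= x -> 0 < (1 - e) * x + e * y.
Proof.
move=> hx he he2 hb; have hy : - y <= `|y| by rewrite -normrN ler_norm.
have hy2 : 0 <= `|y| by [].
nra.
Qed.

Lemma small_choice (x y : R) : 0 < x -> 0 < x / (2 * (`|y| + 1)) /\
  forall e, e <= x / (2 * (`|y| + 1)) -> e * (2 * (`|y| + 1)) <= x.
Proof.
move=> hx; have hp : 0 < 2 * (`|y| + 1) by rewrite mulr_gt0 // ltr_wpDl.
split; first by rewrite divr_gt0.
by move=> e; rewrite ler_pdivlMr.
Qed.

Definition centroid F : pt2 R := comb3 (1/3) (1/3) (1/3) (newest F) (redge1 F) (redge2 F).

Lemma perturb K F p : Dt K != 0 -> Dt F != 0 -> Defs.closedT F p -> Defs.openT K p ->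
  exists q, Defs.openT F q /\ Defs.openT K q.
Proof.
move=> hK hF /(closedT_bc _ hF) [f0 f1 f2] /(openT_bc _ hK) [k0 k1 k2].
set c := centroid F.
have [hc0 hc1 hc2] : [/\ bc0 F c = 1/3, bc1 F c = 1/3 & bc2 F c = 1/3].
  by apply: bc_uniq => //; field.
have [s0 t0] := small_choice (bc0 K c) k0.
have [s1 t1] := small_choice (bc1 K c) k1.
have [s2 t2] := small_choice (bc2 K c) k2.
set e := Num.min (1/2 : R) (Num.min (bc0 K p / (2 * (`|bc0 K c| + 1)))
   (Num.min (bc1 K p / (2 * (`|bc1 K c| + 1))) (bc2 K p / (2 * (`|bc2 K c| + 1))))).
have he : 0 < e by rewrite /e !lt_min s0 s1 s2 andbT; apply/andP; split => //; lra.
have he2 : e <= 1/2 by rewrite /e ge_min lexx.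
have e0 : e <= bc0 K p / (2 * (`|bc0 K c| + 1)) by rewrite /e !ge_min lexx orbT.
have e1 : e <= bc1 K p / (2 * (`|bc1 K c| + 1)) by rewrite /e !ge_min lexx !orbT.
have e2 : e <= bc2 K p / (2 * (`|bc2 K c| + 1)) by rewrite /e !ge_min lexx !orbT.
exists (lerp p c e); split.
  apply/(openT_bc _ hF); have [a0 a1 a2] := bc_aff F.
  rewrite !aff_lerp // hc0 hc1 hc2; split; nra.
apply/(openT_bc _ hK); have [a0 a1 a2] := bc_aff K.
rewrite !aff_lerp //; split; apply: small_pos => //; [exact: t0|exact: t1|exact: t2].
Qed.


Definition edges K : seq (pt2 R * pt2 R) :=
  [:: (newest K, redge1 K); (newest K, redge2 K); (redge1 K, redge2 K)].
Definition relint (e : pt2 R * pt2 R) z := exists t, [/\ 0 < t, t < 1 & z = lerp e.1 e.2 t].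
Definition cseg (e : pt2 R * pt2 R) z := exists t, [/\ 0 <= t, t <= 1 & z = lerp e.1 e.2 t].

Lemma lerp_comb3a p q r t : lerp p q t = comb3 (1 - t) t 0 p q r.
Proof. rewrite /lerp /comb3; congr (_, _); ring. Qed.
Lemma lerp_comb3b p q r t : lerp p q t = comb3 (1 - t) 0 t p r q.
Proof. rewrite /lerp /comb3; congr (_, _); ring. Qed.
Lemma lerp_comb3c p q r t : lerp p q t = comb3 0 (1 - t) t r p q.
Proof. rewrite /lerp /comb3; congr (_, _); ring. Qed.

Lemma edge_cseg_closed K e z : e \in edges K -> cseg e z -> Defs.closedT K z.
Proof.
rewrite !inE => he [t [t0 t1 ->]].
case/or3P: he => /eqP -> /=.
- exists (1 - t), t, 0; split; [lra|lra|lra|lra|exact: lerp_comb3a].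
- exists (1 - t), 0, t; split; [lra|lra|lra|lra|exact: lerp_comb3b].
- exists 0, (1 - t), t; split; [lra|lra|lra|lra|exact: lerp_comb3c].
Qed.

Lemma relint_cseg e z : relint e z -> cseg e z.
Proof. by case=> t [t0 t1 ->]; exists t; split => //; apply: ltW. Qed.

Lemma edge_relint_notopen K e z : Dt K != 0 -> e \in edges K -> relint e z ->
  ~ Defs.openT K z.
Proof.
move=> hD; rewrite !inE => he [t [t0 t1 ->]] ho; move/(openT_bc _ hD): ho => [s0 s1 s2].
have [[h1 h2 h3] [h4 h5 h6] [h7 h8 h9]] := bcv hD.
have [a0 a1 a2] := bc_aff K.
case/or3P: he => /eqP ?; subst e.
- by move: s2; rewrite aff_lerp // h3 h6 !mulr0 addr0 ltxx.
- by move: s1; rewrite aff_lerp // h2 h8 !mulr0 addr0 ltxx.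
- by move: s0; rewrite aff_lerp // h4 h7 !mulr0 addr0 ltxx.
Qed.

Lemma bd_relint E x : Dt E != 0 -> bdT E x -> x \notin vertices E ->
  exists2 e, e \in edges E & relint e x.
Proof.
move=> hD [/(closedT_bc _ hD) [c0 c1 c2] hno] hnv.
have hx := bc_comb x hD.
have hs : bc0 E x + bc1 E x + bc2 E x = 1 by rewrite /bc0; ring.
have hop : ~ [/\ 0 < bc0 E x, 0 < bc1 E x & 0 < bc2 E x] by move=> h; apply: hno; apply/(openT_bc _ hD).
move: c0 c1 c2 hx hs hop; generalize (bc0 E x) (bc1 E x) (bc2 E x) => b0 b1 b2 c0 c1 c2 hx hs hop.
move: hnv; rewrite !inE !negb_or => /and3P [n0 n1 n2].
have [e0|p0] := eqVneq b0 0.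
  exists (redge1 E, redge2 E); first by rewrite !inE eqxx ?orbT.
  have [e2|p2] := eqVneq b2 0.
    exfalso; move/eqP: n1; apply; rewrite hx e0 e2 (_ : b1 = 1); last lra; rewrite /comb3 [RHS]surjective_pairing; congr (_, _); ring.
  have [e1|p1] := eqVneq b1 0.
    exfalso; move/eqP: n2; apply; rewrite hx e0 e1 (_ : b2 = 1); last lra; rewrite /comb3 [RHS]surjective_pairing; congr (_, _); ring.
  exists b2; split; first by rewrite lt_def p2 c2.
    have hh : 0 < b1 by rewrite lt_def p1 c1.
    lra.
  have hb : b1 = 1 - b2 by lra.
  by rewrite hx e0 hb /comb3 /lerp /=; congr (_, _); ring.
have [e1|p1] := eqVneq b1 0.
  exists (newest E, redge2 E); first by rewrite !inE eqxx ?orbT.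
  have [e2|p2] := eqVneq b2 0.
    exfalso; move/eqP: n0; apply; rewrite hx e1 e2 (_ : b0 = 1); last lra; rewrite /comb3 [RHS]surjective_pairing; congr (_, _); ring.
  exists b2; split; first by rewrite lt_def p2 c2.
    have hh : 0 < b0 by rewrite lt_def p0 c0.
    lra.
  have hb : b0 = 1 - b2 by lra.
  by rewrite hx e1 hb /comb3 /lerp /=; congr (_, _); ring.
have [e2|p2] := eqVneq b2 0.
  exists (newest E, redge1 E); first by rewrite !inE eqxx ?orbT.
  exists b1; split; first by rewrite lt_def p1 c1.
    have hh : 0 < b0 by rewrite lt_def p0 c0.
    lra.
  have hb : b0 = 1 - b1 by lra.
  by rewrite hx e2 hb /comb3 /lerp /=; congr (_, _); ring.
exfalso; apply: hop; split; rewrite lt_def ?p0 ?p1 ?p2 ?c0 ?c1 ?c2 //.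
Qed.



Lemma nd_distinct K : Dt K != 0 ->
  [/\ newest K != redge1 K, newest K != redge2 K & redge1 K != redge2 K].
Proof.
rewrite /Dt /det2 /psub => hD; split; apply/eqP => he; move: hD; rewrite he.
- by rewrite !subrr !mul0r subrr eqxx.
- by rewrite !subrr !mulr0 subrr eqxx.
- by rewrite mulrC subrr eqxx.
Qed.

Definition vc K u p := if u == newest K then bc0 K p else if u == redge1 K then bc1 K p else bc2 K p.

Lemma vc_aff K u : affine (vc K u).
Proof.
rewrite /vc; case: eqP => _; first exact: aff_bc0.
case: eqP => _; [exact: aff_bc1|exact: aff_bc2].
Qed.

Lemma vc_vert K u v : Dt K != 0 -> u \in vertices K -> v \in vertices K ->
  vc K u v = (u == v)%:R.
Proof.
move=> hD; have [d1 d2 d3] := nd_distinct hD.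
have [[h1 h2 h3] [h4 h5 h6] [h7 h8 h9]] := bcv hD.
have d1' := d1; have d2' := d2; have d3' := d3.
rewrite eq_sym in d1'; rewrite eq_sym in d2'; rewrite eq_sym in d3'.
rewrite /vc !inE => /or3P [/eqP->|/eqP->|/eqP->] /or3P [/eqP->|/eqP->|/eqP->];
  rewrite ?eqxx ?(negbTE d1) ?(negbTE d2) ?(negbTE d3) ?(negbTE d1') ?(negbTE d2') ?(negbTE d3') //.
Qed.

Lemma relint_vc K u1 u2 u p : Dt K != 0 -> u1 \in vertices K -> u2 \in vertices K ->
  u1 != u2 -> relint (u1, u2) p -> u \in vertices K ->
  (0 < vc K u p) = (u == u1) || (u == u2).
Proof.
move=> hD h1 h2 hne [t [t0 t1 ->]] hu /=.
rewrite aff_lerp; last exact: vc_aff.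
rewrite !vc_vert //.
have [e1|n1] := eqVneq u u1.
  subst u; rewrite ?eqxx (negbTE hne) /=; apply/idP.
  rewrite mulr1n mulr0n; lra.
have [e2|n2] := eqVneq u u2.
  subst u => /=; apply/idP.
  rewrite mulr1n mulr0n; lra.
by rewrite /= !mulr0n !mulr0 addr0 ltxx.
Qed.

Lemma same_tri K u1 u2 u3 u4 p : Dt K != 0 ->
  u1 \in vertices K -> u2 \in vertices K -> u3 \in vertices K -> u4 \in vertices K ->
  u1 != u2 -> u3 != u4 -> relint (u1, u2) p -> relint (u3, u4) p ->
  (u3, u4) = (u1, u2) \/ (u3, u4) = (u2, u1).
Proof.
move=> hD h1 h2 h3 h4 n12 n34 r12 r34.
have e3 : (u3 == u1) || (u3 == u2).
  by rewrite -(relint_vc hD h1 h2 n12 r12 h3) (relint_vc hD h3 h4 n34 r34 h3) eqxx.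
have e4 : (u4 == u1) || (u4 == u2).
  by rewrite -(relint_vc hD h1 h2 n12 r12 h4) (relint_vc hD h3 h4 n34 r34 h4) eqxx orbT.
case/orP: e3 => /eqP ?; case/orP: e4 => /eqP ?; subst; auto;
  by move: n34; rewrite eqxx.
Qed.

Lemma aff_conv g (s : seq (pt2 R)) (l : pt2 R -> R) : affine g -> \sum_(q <- s) l q = 1 ->
  g (\sum_(q <- s) l q * q.1, \sum_(q <- s) l q * q.2) = \sum_(q <- s) l q * g q.
Proof.
case=> a [b [c h]] hl; rewrite h /=.
under [RHS]eq_bigr => q _ do rewrite h mulrDr mulrDr.
rewrite !big_split /= -!mulr_suml hl mul1r !mulr_sumr.
congr (_ + _ + _); apply: eq_bigr => q _; ring.
Qed.

End G.


Section D.
Variable R : realType.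
Implicit Types (K F E : tri R) (p q z : pt2 R) (e f B : pt2 R * pt2 R).

Definition prm (k i : nat) : R := i%:R / 2 ^+ k.
Definition dpt B k i := lerp B.1 B.2 (prm k i).
Definition dyadic e B := exists k i, (i < 2 ^ k)%N /\
  (e = (dpt B k i, dpt B k i.+1) \/ e = (dpt B k i.+1, dpt B k i)).

Lemma two_exp_neq0 k : (2 : R) ^+ k != 0.
Proof. by rewrite expf_neq0 // pnatr_eq0. Qed.
Lemma two_exp_gt0 k : 0 < (2 : R) ^+ k.
Proof. by rewrite exprn_gt0. Qed.

Lemma lerp_lerp (u v : pt2 R) (a b s : R) : lerp (lerp u v a) (lerp u v b) s = lerp u v (a + s * (b - a)).
Proof. rewrite /lerp /=; congr (_, _); ring. Qed.

Lemma lerp0 (u v : pt2 R) : lerp u v 0 = u.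
Proof. by rewrite /lerp !mul0r !addr0 -surjective_pairing. Qed.
Lemma lerp1 (u v : pt2 R) : lerp u v 1 = v.
Proof. rewrite /lerp [RHS]surjective_pairing; congr (_, _); ring. Qed.

Lemma prm0 i : prm 0 i = i%:R.
Proof. by rewrite /prm expr0 divr1. Qed.

Lemma dy_refl e : dyadic e e.
Proof.
exists 0%N, 0%N; split => //; left; rewrite /dpt prm0 prm0 lerp0 /= mulr1n.
by rewrite lerp1 -surjective_pairing.
Qed.

Lemma dy_swap e : dyadic (e.2, e.1) e.
Proof.
exists 0%N, 0%N; split => //; right; rewrite /dpt prm0 prm0 lerp0 /= mulr1n.
by rewrite lerp1.
Qed.

Lemma mid_lerp (a b : pt2 R) : midpoint a b = lerp a b (1/2).
Proof. rewrite /midpoint /lerp; congr (_, _); by field. Qed.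

Lemma dy_half1 (a b : pt2 R) : dyadic (midpoint a b, a) (a, b).
Proof.
exists 1%N, 0%N; split => //; right; rewrite /dpt /prm /= mid_lerp mulr0n mul0r lerp0.
by rewrite expr1 mulr1n.
Qed.

Lemma dy_half2 (a b : pt2 R) : dyadic (midpoint a b, b) (a, b).
Proof.
exists 1%N, 1%N; split => //; left; rewrite /dpt /prm /= mid_lerp.
rewrite expr1 mulr1n; congr (_, _); rewrite -[LHS](lerp1 a b); congr (lerp _ _ _); by field.
Qed.

Lemma dpt_up B k l i j : dpt (dpt B k i, dpt B k i.+1) l j = dpt B (k + l) (i * 2 ^ l + j).
Proof.
rewrite {1}/dpt /= lerp_lerp; congr lerp; rewrite /prm -[i.+1]addn1 !natrD natrM natrX exprD.
by field; rewrite ?two_exp_neq0.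
Qed.

Lemma dpt_down B k l i j : (j <= 2 ^ l)%N ->
  dpt (dpt B k i.+1, dpt B k i) l j = dpt B (k + l) (i.+1 * 2 ^ l - j).
Proof.
move=> hj; rewrite {1}/dpt /= lerp_lerp; congr lerp.
have hj' : (j <= i.+1 * 2 ^ l)%N by rewrite (leq_trans hj) // leq_pmull.
rewrite /prm natrB // natrM natrX exprD -[i.+1]addn1 !natrD.
by field; rewrite ?two_exp_neq0.
Qed.

Lemma dy_trans e f B : dyadic e f -> dyadic f B -> dyadic e B.
Proof.
case=> l [j [hj he]] [k [i [hi hf]]].
have hjl : (j.+1 <= 2 ^ l)%N by [].
have hik : (i.+1 <= 2 ^ k)%N by [].
have hb : (i.+1 * 2 ^ l <= 2 ^ (k + l))%N by rewrite expnD leq_mul2r hik orbT.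
case: he => ->; case: hf => ->.
- exists (k + l)%N, (i * 2 ^ l + j)%N; split.
    by apply: leq_trans hb; rewrite mulSn addnC ltn_add2r.
  by left; rewrite !dpt_up addnS.
- exists (k + l)%N, (i.+1 * 2 ^ l - j.+1)%N; split.
    apply: leq_trans hb; rewrite ltn_subLR; last by apply: leq_trans hjl _; rewrite leq_pmull.
    by rewrite addSn ltnS leq_addl.
  right; rewrite !dpt_down //; last exact: ltnW.
  by rewrite subnSK // (leq_trans hjl) // leq_pmull.
- exists (k + l)%N, (i * 2 ^ l + j)%N; split.
    by apply: leq_trans hb; rewrite mulSn addnC ltn_add2r.
  by right; rewrite !dpt_up addnS.
- exists (k + l)%N, (i.+1 * 2 ^ l - j.+1)%N; split.
    apply: leq_trans hb; rewrite ltn_subLR; last by apply: leq_trans hjl _; rewrite leq_pmull.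
    by rewrite addSn ltnS leq_addl.
  left; rewrite !dpt_down //; last exact: ltnW.
  by rewrite subnSK // (leq_trans hjl) // leq_pmull.
Qed.


Lemma lerp_inj (P Q : pt2 R) s s' : P != Q -> lerp P Q s = lerp P Q s' -> s = s'.
Proof.
move=> hne [h1 h2].
have e1 : (s - s') * (Q.1 - P.1) = 0 by rewrite mulrBl; apply/eqP; rewrite subr_eq0; apply/eqP; lra.
have e2 : (s - s') * (Q.2 - P.2) = 0 by rewrite mulrBl; apply/eqP; rewrite subr_eq0; apply/eqP; lra.
have [hs|hs] := eqVneq (s - s') 0; first by apply/eqP; rewrite -subr_eq0 hs.
exfalso; move: hne; rewrite [P]surjective_pairing [Q]surjective_pairing.
move/eqP: e1; rewrite mulf_eq0 (negbTE hs) /= subr_eq0 => /eqP ->.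
move/eqP: e2; rewrite mulf_eq0 (negbTE hs) /= subr_eq0 => /eqP ->.
by rewrite eqxx.
Qed.

Lemma prm_lt k l a b : (prm k a < prm l b) = (a * 2 ^ l < b * 2 ^ k)%N.
Proof.
rewrite /prm ltr_pdivrMr ?two_exp_gt0 // mulrAC ltr_pdivlMr ?two_exp_gt0 //.
by rewrite -!(natrX _ 2) -!natrM ltr_nat.
Qed.

Lemma prm_le k l a b : (prm k a <= prm l b) = (a * 2 ^ l <= b * 2 ^ k)%N.
Proof.
rewrite /prm ler_pdivrMr ?two_exp_gt0 // mulrAC ler_pdivlMr ?two_exp_gt0 //.
by rewrite -!(natrX _ 2) -!natrM ler_nat.
Qed.

Lemma nt_dy i j k l : (i * 2 ^ l.+1 < j.*2.+1 * 2 ^ k)%N ->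
  (j.*2.+1 * 2 ^ k < i.+1 * 2 ^ l.+1)%N ->
  (i * 2 ^ l <= j * 2 ^ k)%N /\ (j.+1 * 2 ^ k <= i.+1 * 2 ^ l)%N.
Proof.
have hP : (0 < 2 ^ k)%N by rewrite expn_gt0.
case: (leqP k l) => hkl.
  have El : (2 ^ l = 2 ^ k * 2 ^ (l - k))%N by rewrite -expnD subnKC.
  rewrite expnS El; move: (2 ^ k)%N hP (2 ^ (l - k))%N => P hP c h1 h2.
  have h1' : (i * c * 2 < j.*2.+1)%N by nia.
  have h2' : (j.*2.+1 < i.+1 * c * 2)%N by nia.
  split; nia.
have Ek : (2 ^ k = 2 ^ l.+1 * 2 ^ (k - l.+1))%N by rewrite -expnD subnKC.
have hQ : (0 < 2 ^ l.+1)%N by rewrite expn_gt0.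
rewrite Ek; move: (2 ^ l.+1)%N hQ (2 ^ (k - l.+1))%N => Q hQ c h1 h2.
have h1' : (i < j.*2.+1 * c)%N by nia.
have h2' : (j.*2.+1 * c < i.+1)%N by nia.
exfalso; lia.
Qed.


Lemma cseg_lerp (P Q : pt2 R) a b s : a < b -> a <= s -> s <= b ->
  cseg (lerp P Q a, lerp P Q b) (lerp P Q s) /\ cseg (lerp P Q b, lerp P Q a) (lerp P Q s).
Proof.
move=> hab h1 h2; have hba : b - a != 0 by rewrite subr_eq0 gt_eqF.
have hp : 0 < b - a by rewrite subr_gt0.
split.
  exists ((s - a) / (b - a)); split.
  - by apply: divr_ge0; rewrite subr_ge0 // ltW.
  - by rewrite ler_pdivrMr // mul1r lerD2r.
  - by rewrite /= lerp_lerp; congr lerp; field.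
exists ((b - s) / (b - a)); split.
- by apply: divr_ge0; rewrite subr_ge0 // ltW.
- by rewrite ler_pdivrMr // mul1r lerD2l lerN2.
- by rewrite /= lerp_lerp; congr lerp; field.
Qed.

Lemma relint_lerp (P Q : pt2 R) a b m : a < b ->
  relint (lerp P Q a, lerp P Q b) m \/ relint (lerp P Q b, lerp P Q a) m ->
  exists s, [/\ m = lerp P Q s, a < s & s < b].
Proof.
move=> hab [[t [t0 t1 ->]]|[t [t0 t1 ->]]] /=; rewrite lerp_lerp.
  by exists (a + t * (b - a)); split => //; nra.
by exists (b + t * (a - b)); split => //; nra.
Qed.

Lemma mid_dpt B l j : midpoint (dpt B l j) (dpt B l j.+1) = dpt B l.+1 j.*2.+1 /\
  midpoint (dpt B l j.+1) (dpt B l j) = dpt B l.+1 j.*2.+1.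
Proof.
rewrite !mid_lerp /dpt !lerp_lerp /prm -!muln2 -[j.+1]addn1 -[(j * 2).+1]addn1 !natrD natrM exprS.
by split; congr lerp; field; rewrite ?two_exp_neq0.
Qed.

Lemma prm_lt_succ k i : prm k i < prm k i.+1.
Proof. by rewrite prm_lt ltn_pmul2r ?expn_gt0. Qed.

Lemma dy_mid e f B : dyadic e B -> dyadic f B -> B.1 != B.2 ->
  relint e (midpoint f.1 f.2) -> cseg e f.1 /\ cseg e f.2.
Proof.
case=> k [i [hi he]] [l [j [hj hf]]] hB hr.
have hm : midpoint f.1 f.2 = dpt B l.+1 j.*2.+1.
  by have [m1 m2] := mid_dpt B l j; case: hf => -> /=.
have [s [hs s1 s2]] : exists s, [/\ midpoint f.1 f.2 = lerp B.1 B.2 s, prm k i < s & s < prm k i.+1].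
  apply: relint_lerp; first exact: prm_lt_succ.
  by case: he hr => -> hr; [left|right].
have es : s = prm l.+1 j.*2.+1 by apply: (lerp_inj hB); rewrite -hs hm.
subst s; move: s1 s2; rewrite !prm_lt => s1 s2.
have [n1 n2] := nt_dy s1 s2.
have c1 : prm k i <= prm l j by rewrite prm_le.
have c2 : prm l j.+1 <= prm k i.+1 by rewrite prm_le.
have c3 := ltW (prm_lt_succ l j).
have hk := prm_lt_succ k i.
have [a1 a2] := cseg_lerp B.1 B.2 hk c1 (le_trans c3 c2).
have [b1 b2] := cseg_lerp B.1 B.2 hk (le_trans c1 c3) c2.
by case: he => ->; case: hf => -> /=.
Qed.

End D.


Section H.
Variable R : realType.
Implicit Types (K F E G : tri R) (p q z : pt2 R) (e f B : pt2 R * pt2 R) (T H : seq (tri R)).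

Definition disj K F := forall p, ~ (Defs.openT K p /\ Defs.openT F p).
Definition allE H := flatten (map (@edges R) H).

Lemma allEP e H : reflect (exists2 F, F \in H & e \in edges F) (e \in allE H).
Proof. exact: flatten_mapP. Qed.

Lemma verts_closed K q : q \in vertices K -> Defs.closedT K q.
Proof.
rewrite !inE => /or3P [] /eqP ->.
- exists 1, 0, 0; split; rewrite ?lexx ?ler01 //; first ring.
  rewrite /comb3 [LHS]surjective_pairing; congr (_, _); ring.
- exists 0, 1, 0; split; rewrite ?lexx ?ler01 //; first ring.
  rewrite /comb3 [LHS]surjective_pairing; congr (_, _); ring.
- exists 0, 0, 1; split; rewrite ?lexx ?ler01 //; first ring.
  rewrite /comb3 [LHS]surjective_pairing; congr (_, _); ring.
Qed.

Lemma sub_tri_refl K : sub_tri K K.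
Proof. by move=> q; apply: verts_closed. Qed.

Lemma sub_tri_closed K F p : Dt F != 0 -> sub_tri K F -> Defs.closedT K p -> Defs.closedT F p.
Proof.
move=> hF hs [l0 [l1 [l2 [h0 h1 h2 hl ->]]]].
have v0 := hs _ (mem_head _ _).
have v1 : Defs.closedT F (redge1 K) by apply: hs; rewrite !inE eqxx orbT.
have v2 : Defs.closedT F (redge2 K) by apply: hs; rewrite !inE eqxx !orbT.
move/(closedT_bc _ hF): v0 => [a0 a1 a2].
move/(closedT_bc _ hF): v1 => [b0 b1 b2].
move/(closedT_bc _ hF): v2 => [c0 c1 c2].
have [x0 x1 x2] := bc_aff F.
apply/(closedT_bc _ hF); rewrite !aff_comb3 //; split;
  by apply: addr_ge0; [apply: addr_ge0|]; apply: mulr_ge0.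
Qed.

Lemma sub_tri_trans K F G : Dt G != 0 -> sub_tri K F -> sub_tri F G -> sub_tri K G.
Proof.
move=> hG h1 h2 q hq; apply: (sub_tri_closed hG h2); exact: h1.
Qed.

Lemma centroid_open K : Dt K != 0 -> Defs.openT K (centroid K).
Proof. move=> hD; exists (1/3), (1/3), (1/3); split => //; lra. Qed.

Lemma disj_sub K F G : Dt K != 0 -> Dt F != 0 -> sub_tri K F -> disj F G -> disj K G.
Proof. by move=> hK hF hs hd p [h1 h2]; apply: (hd p); split => //; exact: int_sub h1. Qed.

Lemma disj_sym K F : disj K F -> disj F K.
Proof. by move=> h p [a b]; apply: (h p). Qed.

Lemma edge_verts K e : e \in edges K -> e.1 \in vertices K /\ e.2 \in vertices K.
Proof. by rewrite !inE => /or3P [] /eqP -> ; split; rewrite /= ?inE ?eqxx ?orbT. Qed.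

Lemma edge_neq K e : Dt K != 0 -> e \in edges K -> e.1 != e.2.
Proof.
move=> hD; have [d1 d2 d3] := nd_distinct hD.
by rewrite !inE => /or3P [] /eqP -> /=.
Qed.

Definition ch1 K : tri R := (midpoint (redge1 K) (redge2 K), newest K, redge1 K).
Definition ch2 K : tri R := (midpoint (redge1 K) (redge2 K), newest K, redge2 K).

Lemma childrenE K : children K = [:: ch1 K; ch2 K].
Proof. by []. Qed.

Lemma Dt_ch K : Dt (ch1 K) = Dt K / 2 /\ Dt (ch2 K) = - (Dt K / 2).
Proof.
rewrite /Dt /ch1 /ch2 /newest /redge1 /redge2 /midpoint /det2 /psub /=.
by split; field.
Qed.

Lemma nd_ch K : Dt K != 0 -> Dt (ch1 K) != 0 /\ Dt (ch2 K) != 0.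
Proof.
move=> hD; have [-> ->] := Dt_ch K.
by rewrite oppr_eq0 mulf_eq0 invr_eq0 pnatr_eq0 (negbTE hD).
Qed.

Lemma mid_closed K : Defs.closedT K (midpoint (redge1 K) (redge2 K)).
Proof.
exists 0, (1/2), (1/2); split; [lra|lra|lra|lra|].
rewrite /comb3 /midpoint; congr (_, _); by field.
Qed.

Lemma sub_ch K : sub_tri (ch1 K) K /\ sub_tri (ch2 K) K.
Proof.
split => q; rewrite !inE /ch1 /ch2 /newest /redge1 /redge2 /= => /or3P [] /eqP ->;
  (try exact: mid_closed); apply: verts_closed; rewrite !inE eqxx ?orbT //.
Qed.

Lemma ch_neq K : Dt K != 0 -> ch1 K != ch2 K.
Proof.
move=> hD; have [_ _ d3] := nd_distinct hD.
by apply: contra d3 => /eqP [->].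
Qed.

Lemma bc_ch1 K l0 l1 l2 : Dt K != 0 -> l0 + l1 + l2 = 1 ->
  let p := comb3 l0 l1 l2 (newest (ch1 K)) (redge1 (ch1 K)) (redge2 (ch1 K)) in
  bc1 K p = l0 / 2 + l2 /\ bc2 K p = l0 / 2.
Proof.
move=> hD hl /=; have [[h1 h2 h3] [h4 h5 h6] [h7 h8 h9]] := bcv hD.
have [x0 x1 x2] := bc_aff K.
rewrite !aff_comb3 // /ch1 /newest /redge1 /redge2 /= !aff_mid //.
rewrite -/(newest K) -/(redge1 K) -/(redge2 K) h2 h3 h5 h6 h8 h9; split; ring.
Qed.

Lemma bc_ch2 K l0 l1 l2 : Dt K != 0 -> l0 + l1 + l2 = 1 ->
  let p := comb3 l0 l1 l2 (newest (ch2 K)) (redge1 (ch2 K)) (redge2 (ch2 K)) in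
  bc1 K p = l0 / 2 /\ bc2 K p = l0 / 2 + l2.
Proof.
move=> hD hl /=; have [[h1 h2 h3] [h4 h5 h6] [h7 h8 h9]] := bcv hD.
have [x0 x1 x2] := bc_aff K.
rewrite !aff_comb3 // /ch2 /newest /redge1 /redge2 /= !aff_mid //.
rewrite -/(newest K) -/(redge1 K) -/(redge2 K) h2 h3 h5 h6 h8 h9; split; ring.
Qed.

Lemma disj_ch K : Dt K != 0 -> disj (ch1 K) (ch2 K).
Proof.
move=> hD p [[l0 [l1 [l2 [h0 h1 h2 hl hp]]]] [m0 [m1 [m2 [g0 g1 g2 hm hq]]]]].
have [a1 a2] := bc_ch1 hD hl; have [b1 b2] := bc_ch2 hD hm.
rewrite -hp in a1 a2; rewrite -hq in b1 b2.
lra.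
Qed.

End H.


Section H2.
Local Open Scope classical_set_scope.
Variable R : realType.
Implicit Types (K F E G : tri R) (p q z : pt2 R) (e f B : pt2 R * pt2 R) (T H : seq (tri R)).

Record MInv T H : Prop := {
  inv_nd : forall F, F \in H -> Dt F != 0;
  inv_TH : {subset T <= H};
  inv_uq : uniq T;
  inv_dj : forall G K, G \in T -> K \in T -> G != K -> disj G K;
  inv_ns : forall K F, K \in T -> F \in H -> sub_tri K F \/ disj K F;
  inv_dy : forall e f, e \in allE H -> f \in allE H ->
     (exists p, relint e p /\ relint f p) -> exists B, dyadic e B /\ dyadic f B }.

Lemma conv_vert K (cv : seq (pt2 R)) u p : Dt K != 0 -> {subset cv <= vertices K} ->
  Defs.conv cv p -> u \in vertices K -> 0 < vc K u p -> u \in cv.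
Proof.
move=> hD hsub [l [hl0 hl1 ->]] hu; rewrite aff_conv //; last exact: vc_aff.
apply: contraTT => hn; rewrite -leNgt big1_seq //.
move=> q; rewrite mem_undup => hq; rewrite vc_vert //; last exact: hsub.
have -> : (u == q) = false by apply/negbTE; apply: contraNneq hn => ->.
by rewrite mulr0.
Qed.

Lemma dy_pair e f : (f = e \/ f = (e.2, e.1)) -> exists B, dyadic e B /\ dyadic f B.
Proof.
by case=> ->; exists e; split; [exact: dy_refl|exact: dy_refl| exact: dy_refl|exact: dy_swap].
Qed.

Lemma same_tri_edges K e f p : Dt K != 0 -> e.1 \in vertices K -> e.2 \in vertices K ->
  e.1 != e.2 -> f \in edges K -> relint e p -> relint f p ->
  exists B, dyadic e B /\ dyadic f B.
Proof.
move=> hD h1 h2 hn hf re rf.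
have [h3 h4] := edge_verts hf.
have := @same_tri _ K e.1 e.2 f.1 f.2 p hD h1 h2 h3 h4 hn (edge_neq hD hf).
rewrite -!surjective_pairing => /(_ re rf) h.
by apply: dy_pair; case: h => ->; [left|right]; rewrite -?surjective_pairing.
Qed.

Lemma Inv0 T0 : conforming T0 -> MInv T0 T0.
Proof.
case=> hu hnd hc; split => //.
- move=> G K hG hK hne p [w1 w2]; have [h _] := hc G K hG hK hne.
  have : (Defs.openT G `&` Defs.openT K) p by [].
  by rewrite h.
- move=> K F hK hF; have [<-|hne] := eqVneq K F; first by left; exact: sub_tri_refl.
  right => p [w1 w2]; have [h _] := hc K F hK hF hne.
  have : (Defs.openT K `&` Defs.openT F) p by [].
  by rewrite h.
move=> e f /allEP [K hK heK] /allEP [K' hK' hfK'] [p [re rf]].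
have hD := hnd K hK; have hD' := hnd K' hK'.
have [ek|hne] := eqVneq K K'.
  subst K'; have [h1 h2] := edge_verts heK.
  exact: (same_tri_edges hD h1 h2 (edge_neq hD heK) hfK' re rf).
have [_ hcv] := hc K K' hK hK' hne.
have pc : (Defs.closedT K `&` Defs.closedT K') p.
  split; [apply: (edge_cseg_closed heK)|apply: (edge_cseg_closed hfK')]; exact: relint_cseg.
rewrite hcv in pc.
have [h1 h2] := edge_verts heK.
have sub : {subset [seq p <- vertices K | p \in vertices K'] <= vertices K}.
  by move=> x; rewrite mem_filter => /andP [].
have hn := edge_neq hD heK.
have r' : relint (e.1, e.2) p by rewrite -surjective_pairing.
have g1 : e.1 \in vertices K'.
  have := conv_vert hD sub pc h1; rewrite (relint_vc hD h1 h2 hn r' h1) eqxx.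
  by move/(_ isT); rewrite mem_filter => /andP [].
have g2 : e.2 \in vertices K'.
  have := conv_vert hD sub pc h2; rewrite (relint_vc hD h1 h2 hn r' h2) eqxx orbT.
  by move/(_ isT); rewrite mem_filter => /andP [].
exact: (same_tri_edges hD' g1 g2 hn hfK' re rf).
Qed.

End H2.


Section H3.
Variable R : realType.
Implicit Types (K F E G : tri R) (p q z : pt2 R) (e f B : pt2 R * pt2 R) (T H : seq (tri R)).

Let mK K := midpoint (redge1 K) (redge2 K).

Lemma relint_mz K p : Dt K != 0 -> relint (mK K, newest K) p -> Defs.openT K p.
Proof.
move=> hD [t [t0 t1 ->]] /=; apply/(openT_bc _ hD).
have [[h1 h2 h3] [h4 h5 h6] [h7 h8 h9]] := bcv hD.
have [x0 x1 x2] := bc_aff K.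
rewrite !aff_lerp // /mK !aff_mid // h1 h2 h3 h4 h5 h6 h7 h8 h9; split; lra.
Qed.

Lemma relint_ma K p : relint (mK K, redge1 K) p -> relint (redge1 K, redge2 K) p.
Proof.
case=> t [t0 t1 ->]; exists ((1 - t) / 2); split; [lra|lra|].
rewrite /= /mK /midpoint /lerp /=; congr (_, _); by field.
Qed.

Lemma relint_mb K p : relint (mK K, redge2 K) p -> relint (redge1 K, redge2 K) p.
Proof.
case=> t [t0 t1 ->]; exists ((1 + t) / 2); split; [lra|lra|].
rewrite /= /mK /midpoint /lerp /=; congr (_, _); by field.
Qed.

Lemma ab_edge K : (redge1 K, redge2 K) \in edges K.
Proof. by rewrite !inE eqxx !orbT. Qed.

Lemma relint_ab_notopen K p : Dt K != 0 -> relint (redge1 K, redge2 K) p -> ~ Defs.openT K p.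
Proof. by move=> hD; apply: edge_relint_notopen => //; exact: ab_edge. Qed.

Lemma old_notopen T H K f p : MInv T H -> K \in T -> f \in allE H -> relint f p ->
  Defs.openT K p -> False.
Proof.
move=> I hK /allEP [F hF hfF] rf op.
have hDK := inv_nd I (inv_TH I hK); have hDF := inv_nd I hF.
case: (inv_ns I hK hF) => [hs|hd].
  by apply: (edge_relint_notopen hDF hfF rf); exact: int_sub op.
have cl : Defs.closedT F p by apply: (edge_cseg_closed hfF); exact: relint_cseg.
have [q [q1 q2]] := perturb hDK hDF cl op.
by apply: (hd q).
Qed.

Lemma newE K H e : K \in H -> e \in allE (children K ++ H) ->
  [\/ e = (mK K, newest K), e = (mK K, redge1 K), e = (mK K, redge2 K) | e \in allE H].
Proof.
move=> hK; rewrite /allE map_cat flatten_cat mem_cat => /orP [].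
  move=> h.
  have : e \in [:: (mK K, newest K); (mK K, redge1 K); (newest K, redge1 K);
                 (mK K, newest K); (mK K, redge2 K); (newest K, redge2 K)] by exact: h.
  have e1 : (newest K, redge1 K) \in allE H by apply/allEP; exists K => //; rewrite !inE eqxx.
  have e2 : (newest K, redge2 K) \in allE H by apply/allEP; exists K => //; rewrite !inE eqxx orbT.
  rewrite !inE => /orP [/eqP->|/orP [/eqP->|/orP [/eqP->|/orP [/eqP->|/orP [/eqP->|/eqP->]]]]].
  - by constructor 1.
  - by constructor 2.
  - by constructor 4.
  - by constructor 1.
  - by constructor 3.
  - by constructor 4.
by move=> h; constructor 4.
Qed.

Lemma dy_sym e f : (exists B, dyadic e B /\ dyadic f B) -> exists B, dyadic f B /\ dyadic e B.
Proof. by case=> B [a b]; exists B. Qed.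

Lemma newcase T H K e f : MInv T H -> K \in T ->
  (e = (mK K, newest K) \/ e = (mK K, redge1 K) \/ e = (mK K, redge2 K)) ->
  [\/ f = (mK K, newest K), f = (mK K, redge1 K), f = (mK K, redge2 K) | f \in allE H] ->
  (exists p, relint e p /\ relint f p) -> exists B, dyadic e B /\ dyadic f B.
Proof.
move=> I hK he hf [p [re rf]].
have hKH := inv_TH I hK; have hD := inv_nd I hKH.
have abE : (redge1 K, redge2 K) \in allE H by apply/allEP; exists K => //; exact: ab_edge.
case: he => [?|[?|?]]; subst e.
- have op := relint_mz hD re.
  case: hf => [?|?|?|hf]; subst.
  + by exists (mK K, newest K); split; exact: dy_refl.
  + by exfalso; apply: (relint_ab_notopen hD (relint_ma rf)).
  + by exfalso; apply: (relint_ab_notopen hD (relint_mb rf)).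
  + by exfalso; apply: (old_notopen I hK hf rf op).
- case: hf => [?|?|?|hf]; subst.
  + by exfalso; apply: (relint_ab_notopen hD (relint_ma re)); exact: relint_mz.
  + by exists (mK K, redge1 K); split; exact: dy_refl.
  + by exists (redge1 K, redge2 K); split; [exact: dy_half1|exact: dy_half2].
  + have [B [b1 b2]] := inv_dy I abE hf (ex_intro _ p (conj (relint_ma re) rf)).
    by exists B; split => //; apply: dy_trans b1; exact: dy_half1.
- case: hf => [?|?|?|hf]; subst.
  + by exfalso; apply: (relint_ab_notopen hD (relint_mb re)); exact: relint_mz.
  + by exists (redge1 K, redge2 K); split; [exact: dy_half2|exact: dy_half1].
  + by exists (mK K, redge2 K); split; exact: dy_refl.
  + have [B [b1 b2]] := inv_dy I abE hf (ex_intro _ p (conj (relint_mb re) rf)).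
    by exists B; split => //; apply: dy_trans b1; exact: dy_half2.
Qed.

End H3.


Section H4.
Variable R : realType.
Implicit Types (K F E G : tri R) (p q z : pt2 R) (e f B : pt2 R * pt2 R) (T H : seq (tri R)).

Lemma MInvS T H K : MInv T H -> K \in T -> MInv (bisect T K) (children K ++ H).
Proof.
move=> I hK.
have hKH := inv_TH I hK; have hD := inv_nd I hKH; have uq := inv_uq I.
have [n1 n2] := nd_ch hD; have [s1 s2] := sub_ch K; have d12 := disj_ch hD.
have hne := ch_neq hD.
have remP : forall G, G \in rem K T -> G \in T /\ G != K.
  by move=> G; rewrite (mem_rem_uniq _ uq) !inE => /andP [-> ->].
have bisE : bisect T K = ch1 K :: ch2 K :: rem K T by [].
have chE : children K ++ H = ch1 K :: ch2 K :: H by [].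
have djK : forall G, G \in rem K T -> disj G K.
  by move=> G /remP [hG hGK]; apply: (inv_dj I hG hK hGK).
have cnotin : forall c, Dt c != 0 -> sub_tri c K -> c \in rem K T -> False.
  move=> c hc sc /djK hd.
  by apply: (hd (centroid c)); split; [exact: centroid_open|exact: int_sub (centroid_open hc)].
split.
- by move=> F; rewrite chE !inE => /orP [/eqP->|/orP [/eqP->|/(inv_nd I)]].
- move=> G; rewrite bisE chE !inE => /orP [->|/orP [->|/remP [hG _]]]; rewrite ?orbT //.
  by rewrite (inv_TH I hG) !orbT.
- rewrite bisE /= rem_uniq // andbT !inE negb_or hne /=.
  by apply/andP; split; apply/negP; [move/(cnotin _ n1 s1)|move/(cnotin _ n2 s2)].
- move=> G G'; rewrite bisE !inE.
  have dch : forall c G', Dt c != 0 -> sub_tri c K -> G' \in rem K T -> disj c G'.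
    by move=> c G'' hc sc hG'; apply: (disj_sub hc hD sc); apply: disj_sym; exact: djK.
  case/orP => [/eqP->|/orP [/eqP->|hG]]; case/orP => [/eqP->|/orP [/eqP->|hG']];
    rewrite ?eqxx //.
  + by move=> _; apply: dch.
  + by move=> _; exact: disj_sym.
  + by move=> _; apply: dch.
  + by move=> _; apply: disj_sym; apply: dch.
  + by move=> _; apply: disj_sym; apply: dch.
  + by move=> hGG; have [a _] := remP _ hG; have [b _] := remP _ hG'; apply: (inv_dj I)...
- move=> K' F; rewrite bisE chE !inE.
  have chF : forall c F, Dt c != 0 -> sub_tri c K -> F \in H -> sub_tri c F \/ disj c F.
    move=> c F' hc sc hF; case: (inv_ns I hK hF) => [h|h].
      by left; apply: (sub_tri_trans (inv_nd I hF) sc h).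
    by right; apply: (disj_sub hc hD sc h).
  case/orP => [/eqP->|/orP [/eqP->|hG]]; case/orP => [/eqP->|/orP [/eqP->|hF]].
  + by left; exact: sub_tri_refl.
  + by right.
  + exact: chF.
  + by right; exact: disj_sym.
  + by left; exact: sub_tri_refl.
  + exact: chF.
  + by right; apply: disj_sym; apply: (disj_sub n1 hD s1); apply: disj_sym; exact: djK.
  + by right; apply: disj_sym; apply: (disj_sub n2 hD s2); apply: disj_sym; exact: djK.
  + by have [a _] := remP _ hG; apply: (inv_ns I).
move=> e f he hf hp.
have [e1|e2|e3|eo] := newE hKH he.
- by apply: (newcase I hK) => //; [left|exact: newE].
- by apply: (newcase I hK) => //; [right; left|exact: newE].
- by apply: (newcase I hK) => //; [right; right|exact: newE].
have [f1|f2|f3|fo] := newE hKH hf.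
- apply: dy_sym; apply: (newcase I hK) => //; first by left.
    by constructor 4.
  by case: hp => p [a b]; exists p.
- apply: dy_sym; apply: (newcase I hK) => //; first by right; left.
    by constructor 4.
  by case: hp => p [a b]; exists p.
- apply: dy_sym; apply: (newcase I hK) => //; first by right; right.
    by constructor 4.
  by case: hp => p [a b]; exists p.
by apply: (inv_dy I).
Qed.

Inductive hist (T0 : seq (tri R)) : seq (tri R) -> seq (tri R) -> Prop :=
| hist0 : hist T0 T0 T0
| histS T H K : hist T0 T H -> K \in T -> hist T0 (bisect T K) (children K ++ H).

Lemma hist_inv T0 T H : conforming T0 -> hist T0 T H -> MInv T H.
Proof.
move=> hc; elim => [|T' H' K _ IH hK]; first exact: Inv0.
exact: MInvS.
Qed.

Lemma refines_hist T0 T1 T2 H1 : refines T1 T2 -> hist T0 T1 H1 ->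
  exists H2, hist T0 T2 H2 /\ {subset H1 <= H2}.
Proof.
elim => [|T K _ IH hK] h1; first by exists H1; split => // x.
have [H2 [h2 s2]] := IH h1.
exists (children K ++ H2); split; first exact: histS.
by move=> x /s2 hx; rewrite mem_cat hx orbT.
Qed.

End H4.


Section K.
Local Open Scope classical_set_scope.
Variable R : realType.
Implicit Types (K F E G : tri R) (p q z x : pt2 R) (e f B : pt2 R * pt2 R) (T H : seq (tri R)).

Lemma nodesP x T : reflect (exists2 F, F \in T & x \in vertices F) (x \in nodes T).
Proof. rewrite /nodes mem_undup; exact: flatten_mapP. Qed.

Lemma nodes_bisect T K : K \in T -> {subset nodes T <= nodes (bisect T K)}.
Proof.
move=> hK x /nodesP [G hG hx]; apply/nodesP.
have [eGK|nGK] := eqVneq G K.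
  subst G; move: hx; rewrite !inE => /or3P [] /eqP ->.
  - by exists (ch1 K); rewrite !inE eqxx ?orbT.
  - by exists (ch1 K); rewrite !inE eqxx ?orbT.
  - by exists (ch2 K); rewrite !inE eqxx ?orbT.
exists G => //; rewrite /bisect mem_cat; apply/orP; right; exact: rem_mem.
Qed.

Lemma nodes_refines T1 T2 : refines T1 T2 -> {subset nodes T1 <= nodes T2}.
Proof.
elim => [|T K _ IH hK] x hx //; apply: nodes_bisect => //; exact: IH.
Qed.

Lemma dy_nondeg e B : dyadic e B -> e.1 != e.2 -> B.1 != B.2.
Proof.
case=> k [i [_ he]]; apply: contraNneq => hB.
by case: he => -> /=; rewrite /dpt /lerp hB !subrr !mulr0.
Qed.

Lemma parents_closed T0 T E x z1 z2 : conforming T0 -> refines T0 T -> E \in T ->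
  bdT E x -> x \notin vertices E -> parent_pair T0 T x z1 z2 ->
  [/\ Defs.closedT E z1, Defs.closedT E z2, z1 \in nodes T & z2 \in nodes T].
Proof.
move=> hc hT hE hbd hnv [T' [K [r1 hK r2 [-> -> hx]]]].
have [H' [h' _]] := refines_hist r1 (hist0 T0).
have hS := histS h' hK.
have [H [hH sH]] := refines_hist r2 hS.
have I := hist_inv hc hH.
have I' := hist_inv hc h'.
have hKH : K \in H by apply: sH; rewrite mem_cat (inv_TH I' hK) orbT.
have hEH := inv_TH I hE.
have hDE := inv_nd I hEH.
have [e heE re] := bd_relint hDE hbd hnv.
have abE : (redge1 K, redge2 K) \in allE H by apply/allEP; exists K => //; rewrite !inE eqxx !orbT.
have eE : e \in allE H by apply/allEP; exists E.
have rab : relint (redge1 K, redge2 K) x.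
  by rewrite hx; exists (1/2); split; [lra|lra|rewrite mid_lerp].
have [B [b1 b2]] := inv_dy I eE abE (ex_intro _ x (conj re rab)).
have hB := dy_nondeg b1 (edge_neq hDE heE).
have rm : relint e (midpoint (redge1 K, redge2 K).1 (redge1 K, redge2 K).2) by rewrite /= -hx.
have [c1 c2] := dy_mid b1 b2 hB rm.
split.
- exact: edge_cseg_closed heE c1.
- exact: edge_cseg_closed heE c2.
- apply: (nodes_refines r2); apply/nodesP; exists (ch1 K); first by rewrite /bisect mem_cat !inE eqxx.
  by rewrite !inE eqxx ?orbT.
- apply: (nodes_refines r2); apply/nodesP; exists (ch2 K); first by rewrite /bisect mem_cat !inE eqxx ?orbT.
  by rewrite !inE eqxx ?orbT.
Qed.

End K.


Section K2.
Local Open Scope classical_set_scope.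
Variable R : realType.
Implicit Types (K F E G : tri R) (p q z x : pt2 R) (e f B : pt2 R * pt2 R) (T H : seq (tri R)).

Lemma parents_spec T0 T z : (exists pr : pt2 R * pt2 R, parent_pair T0 T z pr.1 pr.2) ->
  parent_pair T0 T z (parents T0 T z).1 (parents T0 T z).2.
Proof.
rewrite /parents; case: pselect => // h _.
by case: (cid h).
Qed.

Lemma parents_def T0 T z : ~ (exists pr : pt2 R * pt2 R, parent_pair T0 T z pr.1 pr.2) ->
  parents T0 T z = (z, z).
Proof. by rewrite /parents; case: pselect. Qed.

Lemma idx_chain T0 T z n : ~ proper_node T z -> parents T0 T z = (z, z) -> ~ idx_le T0 T z n.
Proof.
move=> hnp hpz h.
suff: forall y, idx_le T0 T y n -> y = z -> False by move/(_ z h erefl).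
move=> y0; elim => [y m hp|y m hn h1 IH1 h2 IH2] ey; first by subst y.
by subst y; apply: IH1; rewrite hpz.
Qed.

Lemma idx_inv T0 T z n : idx_le T0 T z n -> proper_node T z \/
  exists m, [/\ n = m.+1, idx_le T0 T (parents T0 T z).1 m & idx_le T0 T (parents T0 T z).2 m].
Proof. by case => [y m hp|y m hnp h1 h2]; [left|right; exists m]. Qed.

Lemma HEP T E x : reflect [/\ x \in nodes T, bdT E x & x \notin vertices E] (x \in HE T E).
Proof.
rewrite /HE /NE !mem_filter; apply: (iffP idP).
  by case/andP => hv /andP [/asboolP hb hn].
by case=> hn hb hv; rewrite hv hn andbT; apply/asboolP.
Qed.

Lemma mid_sym p q : midpoint p q = midpoint q p.
Proof. by rewrite /midpoint; congr (_, _); rewrite ?[(p.1 + _)]addrC ?[(p.2 + _)]addrC. Qed.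

Lemma mid_open E p q : Dt E != 0 -> Defs.openT E p -> Defs.closedT E q ->
  Defs.openT E (midpoint p q).
Proof.
move=> hD /(openT_bc _ hD) [a0 a1 a2] /(closedT_bc _ hD) [b0 b1 b2].
have [x0 x1 x2] := bc_aff E.
apply/(openT_bc _ hD); rewrite !aff_mid //; split; lra.
Qed.

Lemma classify T E p q x : Dt E != 0 -> Defs.closedT E p -> p \in nodes T ->
  Defs.closedT E q -> x = midpoint p q -> ~ Defs.openT E x ->
  p \in vertices E \/ p \in HE T E.
Proof.
move=> hD hp hn hq hx hno.
have [hv|hv] := boolP (p \in vertices E); first by left.
right; apply/HEP; split => //; split => // hop.
by apply: hno; rewrite hx; exact: mid_open.
Qed.

Lemma step T0 T E x n : conforming T0 -> refines T0 T -> E \in T ->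
  x \in HE T E -> idx_le T0 T x n ->
  exists m, [/\ n = m.+1, idx_le T0 T (parents T0 T x).1 m, idx_le T0 T (parents T0 T x).2 m,
     x = midpoint (parents T0 T x).1 (parents T0 T x).2 &
     ((parents T0 T x).1 \in vertices E \/ (parents T0 T x).1 \in HE T E) /\
     ((parents T0 T x).2 \in vertices E \/ (parents T0 T x).2 \in HE T E)].
Proof.
move=> hc hT hE /HEP [hxn hbd hxv] hidx.
have hnp : ~ proper_node T x by move=> hp; move: hxv; rewrite (hp E hE (proj1 hbd)).
case: (idx_inv hidx) => [//|[m [-> i1 i2]]].
have hex : exists pr : pt2 R * pt2 R, parent_pair T0 T x pr.1 pr.2.
  apply: contrapT => hno; have hd := parents_def hno.
  by apply: (idx_chain (n := m) hnp hd); rewrite hd in i1.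
have pp := parents_spec hex.
have [c1 c2 n1 n2] := parents_closed hc hT hE hbd hxv pp.
have hxm : x = midpoint (parents T0 T x).1 (parents T0 T x).2.
  by case: pp => T' [K [_ _ _ [-> -> ->]]].
have [_ [_ hDE]] : exists H, hist T0 T H /\ Dt E != 0.
  have [H [hH _]] := refines_hist hT (hist0 T0).
  exists H; split => //; have I := hist_inv hc hH; apply: (inv_nd I); exact: (inv_TH I).
exists m; split => //; split.
  exact: (classify hDE c1 n1 c2 hxm (proj2 hbd)).
by apply: (classify hDE c2 n2 c1 _ (proj2 hbd)); rewrite mid_sym.
Qed.

End K2.


Section F1.
Variable R : realType.
Implicit Types (K F E G : tri R) (p q z x : pt2 R) (T H : seq (tri R)).

Lemma interp_bc E (v : pt2 R -> R) x : interpP1 E v x =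
  bc0 E x * v (newest E) + bc1 E x * v (redge1 E) + bc2 E x * v (redge2 E).
Proof. by []. Qed.

Lemma interp_aff E v : affine (interpP1 E v).
Proof.
have [[a0 [b0 [c0 h0]]] [a1 [b1 [c1 h1]]] [a2 [b2 [c2 h2]]]] := bc_aff E.
set A := v (newest E); set B := v (redge1 E); set C := v (redge2 E).
exists (a0 * A + a1 * B + a2 * C), (b0 * A + b1 * B + b2 * C), (c0 * A + c1 * B + c2 * C).
by move=> x; rewrite interp_bc h0 h1 h2 /A /B /C; ring.
Qed.

Lemma interp_vert E v z : Dt E != 0 -> z \in vertices E -> interpP1 E v z = v z.
Proof.
move=> hD; have [[h1 h2 h3] [h4 h5 h6] [h7 h8 h9]] := bcv hD.
rewrite !inE => /or3P [] /eqP ->; rewrite interp_bc ?h1 ?h2 ?h3 ?h4 ?h5 ?h6 ?h7 ?h8 ?h9; ring.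
Qed.

Lemma interp_mid E v p q : interpP1 E v (midpoint p q) = (interpP1 E v p + interpP1 E v q) / 2.
Proof. exact: aff_mid (interp_aff E v). Qed.

Lemma term_le_sum (s : seq (pt2 R)) (Fn : pt2 R -> R) y : uniq s -> y \in s ->
  (forall x, 0 <= Fn x) -> Fn y <= \sum_(x <- s) Fn x.
Proof.
move=> us ys h0; rewrite (bigD1_seq y) //= lerDl.
by apply: sumr_ge0 => x _.
Qed.

Lemma sum_const_le (s : seq (pt2 R)) (Fn : pt2 R -> R) c :
  (forall x, x \in s -> Fn x <= c) -> \sum_(x <- s) Fn x <= (size s)%:R * c.
Proof.
elim: s => [|a s IH] h; first by rewrite big_nil mul0r.
rewrite big_cons /= -addn1 natrD mulrDl mul1r addrC lerD //.
  by apply: IH => x hx; apply: h; rewrite inE hx orbT.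
by apply: h; rewrite inE eqxx.
Qed.

Lemma sq_ineq (a b c : R) : (a - (b + c) / 2) ^+ 2 <= 2 * a ^+ 2 + b ^+ 2 + c ^+ 2.
Proof.
have h1 := sqr_ge0 (a + (b + c) / 2); have h2 := sqr_ge0 (b - c).
rewrite !expr2 in h1 h2 *; nra.
Qed.

Lemma sq_ineq2 (a b c : R) : (a + (b + c) / 2) ^+ 2 <= 2 * a ^+ 2 + b ^+ 2 + c ^+ 2.
Proof.
have := sq_ineq a (- b) (- c); rewrite !sqrrN.
by have -> : a - (- b + - c) / 2 = a + (b + c) / 2 by field.
Qed.

End F1.


Section F2.
Variable R : realType.
Variables (T0 T : seq (tri R)) (E : tri R) (v : pt2 R -> R).
Hypotheses (hc : conforming T0) (hT : refines T0 T) (hE : E \in T) (hD : Dt E != 0).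

Definition ww x := v x - interpP1 E v x.
Definition SHE := \sum_(x <- HE T E) ww x ^+ 2.
Definition DD := \sum_(x <- HE T E) detail T0 T E v x ^+ 2.

Lemma HE_uniq : uniq (HE T E).
Proof. by rewrite /HE /NE !filter_uniq // /nodes undup_uniq. Qed.

Lemma ww_vert z : z \in vertices E -> ww z = 0.
Proof. by move=> hz; rewrite /ww interp_vert // subrr. Qed.

Lemma SHE_ge0 : 0 <= SHE.
Proof. by apply: sumr_ge0 => x _; exact: sqr_ge0. Qed.

Lemma DD_ge0 : 0 <= DD.
Proof. by apply: sumr_ge0 => x _; exact: sqr_ge0. Qed.

Lemma ww_le p : p \in vertices E \/ p \in HE T E -> ww p ^+ 2 <= SHE.
Proof.
case=> hp; first by rewrite ww_vert // expr0n /= SHE_ge0.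
by rewrite /SHE; apply: (term_le_sum HE_uniq hp) => y; exact: sqr_ge0.
Qed.

Lemma dd_le x : x \in HE T E -> detail T0 T E v x ^+ 2 <= DD.
Proof. by move=> hx; rewrite /DD; apply: (term_le_sum HE_uniq hx) => y; exact: sqr_ge0. Qed.

Lemma detail_w x n : x \in HE T E -> idx_le T0 T x n ->
  detail T0 T E v x = ww x - (ww (parents T0 T x).1 + ww (parents T0 T x).2) / 2.
Proof.
move=> hx hi; have [m [_ _ _ hm _]] := step hc hT hE hx hi.
have /HEP [_ _ hxv] := hx.
have hI : interpP1 E v x = (interpP1 E v (parents T0 T x).1 + interpP1 E v (parents T0 T x).2) / 2.
  by rewrite {1}hm interp_mid.
rewrite /detail (negbTE hxv) /ww hI; ring.
Qed.

Lemma upper x n : x \in HE T E -> idx_le T0 T x n -> detail T0 T E v x ^+ 2 <= 4 * SHE.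
Proof.
move=> hx hi; rewrite (detail_w hx hi).
have [m [_ _ _ _ [h1 h2]]] := step hc hT hE hx hi.
have /HEP [_ _ _] := hx.
have a := ww_le (or_intror hx); have b := ww_le h1; have c := ww_le h2.
have := sq_ineq (ww x) (ww (parents T0 T x).1) (ww (parents T0 T x).2).
lra.
Qed.

Lemma lower n : forall x, x \in HE T E -> idx_le T0 T x n -> ww x ^+ 2 <= 4 ^+ n * DD.
Proof.
elim: n => [|n IH] x hx hi.
  by have [m [hm _ _ _ _]] := step hc hT hE hx hi.
have [m [hm i1 i2 _ [h1 h2]]] := step hc hT hE hx hi.
case: hm => ?; subst m.
have hw : ww x = detail T0 T E v x + (ww (parents T0 T x).1 + ww (parents T0 T x).2) / 2.
  by rewrite (detail_w hx hi); ring.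
have hd := dd_le hx.
have hp : 1 <= 4 ^+ n :> R by rewrite exprn_ege1 //; lra.
have hD0 := DD_ge0.
have b1 : ww (parents T0 T x).1 ^+ 2 <= 4 ^+ n * DD.
  case: h1 => hv; first by rewrite ww_vert // expr0n /= mulr_ge0 // exprn_ge0 //; lra.
  exact: IH.
have b2 : ww (parents T0 T x).2 ^+ 2 <= 4 ^+ n * DD.
  case: h2 => hv; first by rewrite ww_vert // expr0n /= mulr_ge0 // exprn_ge0 //; lra.
  exact: IH.
rewrite hw [4 ^+ n.+1]exprS.
have := sq_ineq2 (detail T0 T E v x) (ww (parents T0 T x).1) (ww (parents T0 T x).2).
have : DD <= 4 ^+ n * DD by rewrite ler_peMl.
lra.
Qed.

End F2.


Section F3.
Variable R : realType.
Variables (T0 T : seq (tri R)) (E : tri R).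
Hypotheses (hc : conforming T0) (hT : refines T0 T) (hE : E \in T).

Definition crep (n i j k : nat) : pt2 R :=
  comb3 (i%:R / 2 ^+ n) (j%:R / 2 ^+ n) (k%:R / 2 ^+ n) (newest E) (redge1 E) (redge2 E).

Lemma vrep m p : p \in vertices E -> exists i j k, (i + j + k = 2 ^ m)%N /\ p = crep m i j k.
Proof.
have hm : (2 : R) ^+ m != 0 by exact: two_exp_neq0.
rewrite !inE => /or3P [] /eqP ->.
- exists (2 ^ m)%N, 0%N, 0%N; split; first by rewrite !addn0.
  rewrite /crep natrX /comb3 [LHS]surjective_pairing; congr (_, _); by field.
- exists 0%N, (2 ^ m)%N, 0%N; split; first by rewrite addn0.
  rewrite /crep natrX /comb3 [LHS]surjective_pairing; congr (_, _); by field.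
- exists 0%N, 0%N, (2 ^ m)%N; split; first by [].
  rewrite /crep natrX /comb3 [LHS]surjective_pairing; congr (_, _); by field.
Qed.

Lemma mid_crep m i1 j1 k1 i2 j2 k2 :
  midpoint (crep m i1 j1 k1) (crep m i2 j2 k2) = crep m.+1 (i1 + i2) (j1 + j2) (k1 + k2).
Proof.
have hm : (2 : R) ^+ m != 0 by exact: two_exp_neq0.
rewrite /crep /midpoint /comb3 /= !natrD exprS; congr (_, _); by field.
Qed.

Lemma rep n : forall x, x \in HE T E -> idx_le T0 T x n ->
  exists i j k, (i + j + k = 2 ^ n)%N /\ x = crep n i j k.
Proof.
elim: n => [|n IH] x hx hi.
  by have [m [hm _ _ _ _]] := step hc hT hE hx hi.
have [m [hm i1 i2 hxm [h1 h2]]] := step hc hT hE hx hi.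
case: hm => ?; subst m.
have r1 : exists i j k, (i + j + k = 2 ^ n)%N /\ (parents T0 T x).1 = crep n i j k.
  by case: h1 => h; [exact: vrep|exact: IH].
have r2 : exists i j k, (i + j + k = 2 ^ n)%N /\ (parents T0 T x).2 = crep n i j k.
  by case: h2 => h; [exact: vrep|exact: IH].
case: r1 => [a1 [b1 [c1 [s1 e1]]]]; case: r2 => [a2 [b2 [c2 [s2 e2]]]].
exists (a1 + a2)%N, (b1 + b2)%N, (c1 + c2)%N; split.
  by rewrite expnS; lia.
by rewrite hxm e1 e2 mid_crep.
Qed.

Lemma size_HE (Lam : nat) : admissible Lam T0 T -> (size (HE T E) <= (2 ^ Lam).+1 * (2 ^ Lam).+1)%N.
Proof.
move=> hadm.
set L := [seq crep Lam i j (2 ^ Lam - i - j) | i <- iota 0 (2 ^ Lam).+1, j <- iota 0 (2 ^ Lam).+1].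
have -> : ((2 ^ Lam).+1 * (2 ^ Lam).+1 = size L)%N by rewrite size_allpairs size_iota.
apply: uniq_leq_size; first exact: HE_uniq.
move=> x hx; have /HEP [hn _ _] := hx.
have [i [j [k [s ->]]]] := rep hx (hadm x hn).
have -> : k = (2 ^ Lam - i - j)%N by lia.
apply: (allpairs_f (fun i j => crep Lam i j (2 ^ Lam - i - j))); rewrite mem_iota; lia.
Qed.

End F3.

Unset Implicit Arguments. Set Strict Implicit. Set Printing Implicit Defensive.

Theorem lemma7p1 (R : realType) (Lambda : nat) (T0 : seq (tri R)) (cs Cs : R) :
  conforming T0 -> 0 < cs -> 0 < Cs ->
  exists C : R, 0 < C /\
    forall (T : seq (tri R)) (E : tri R) (VE : (pt2 R -> R) -> Prop),
      refines T0 T -> admissible Lambda T0 T -> E \in T ->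
      local_space T E VE -> stable T E VE cs Cs ->
      forall v, VE v ->
      forall r, H1_semi2 E (fun x => v x - interpP1 E v x) r ->
        \sum_(x <- HE T E) detail T0 T E v x ^+ 2 <= C * r /\
        r <= C * \sum_(x <- HE T E) detail T0 T E v x ^+ 2.
Proof.
move=> hc hcs hCs.
set N : R := ((2 ^ Lambda).+1 * (2 ^ Lambda).+1)%:R.
have hN : 0 <= N by [].
have h4 : 0 <= (4 : R) ^+ Lambda by rewrite exprn_ge0.
have hq : 0 <= N * 4 ^+ Lambda / cs by rewrite divr_ge0 ?mulr_ge0 // ltW.
exists (4 * N * Cs + N * 4 ^+ Lambda / cs + 1); split.
  have : 0 <= 4 * N * Cs by rewrite !mulr_ge0 // ltW.
  lra.
move=> T E VE hT hadm hE hloc hstab v hv r hr.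
have [H [hH _]] := refines_hist hT (hist0 T0).
have I := hist_inv hc hH.
have hD : Dt E != 0 by apply: (inv_nd I); exact: (inv_TH I).
case: hloc => [[h0 hadd hsc] _ _ haff _].
have hw : VE (ww E v).
  have -> : ww E v = (fun x => v x + (-1) * interpP1 E v x).
    by apply: funext => x; rewrite /ww; ring.
  apply: hadd => //; apply: hsc; exact: haff (interp_aff E v).
have hw0 : forall z, z \in vertices E -> ww E v z = 0 by move=> z; exact: ww_vert.
have [st1 st2] := hstab _ hw hw0 r hr.
have hS : \sum_(x <- NE T E) ww E v x ^+ 2 = SHE T E v.
  rewrite /SHE /HE [in RHS]big_filter [LHS](bigID (fun x => x \in vertices E)) /= big1 ?add0r //.
  by move=> x hx; rewrite hw0 // expr0n.
rewrite hS in st1 st2.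
rewrite -/(DD T0 T E v).
have hsz := size_HE hc hT hE hadm.
set s : R := (size (HE T E))%:R.
have hsN : s <= N by rewrite /s /N ler_nat.
have hs0 : 0 <= s by [].
have hSge := SHE_ge0 T E v.
have hDge := DD_ge0 T0 T E v.
have a1 : DD T0 T E v <= s * (4 * SHE T E v).
  apply: sum_const_le => x hx; have /HEP [hn _ _] := hx.
  exact: (upper v hc hT hE hD hx (hadm x hn)).
have a2 : SHE T E v <= s * (4 ^+ Lambda * DD T0 T E v).
  apply: sum_const_le => x hx; have /HEP [hn _ _] := hx.
  exact: (lower v hc hT hE hD hx (hadm x hn)).
have hr0 : 0 <= r.
  have : 0 <= Cs * r by apply: le_trans st2.
  by rewrite pmulr_rge0.
split.
  have b1 : s * (4 * SHE T E v) <= N * (4 * SHE T E v) by rewrite ler_wpM2r // mulr_ge0.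
  have b2 : N * (4 * SHE T E v) <= N * (4 * (Cs * r)) by rewrite ler_wpM2l // ler_wpM2l.
  have b3 : 0 <= (N * 4 ^+ Lambda / cs + 1) * r by rewrite mulr_ge0 //; lra.
  have : N * (4 * (Cs * r)) = 4 * N * Cs * r by ring.
  nra.
have b1 : s * (4 ^+ Lambda * DD T0 T E v) <= N * (4 ^+ Lambda * DD T0 T E v).
  by rewrite ler_wpM2r // mulr_ge0.
have b2 : r <= N * 4 ^+ Lambda / cs * DD T0 T E v.
  have -> : N * 4 ^+ Lambda / cs * DD T0 T E v = (N * 4 ^+ Lambda * DD T0 T E v) / cs.
    by rewrite mulrAC.
  rewrite ler_pdivlMr // mulrC.
  have : N * (4 ^+ Lambda * DD T0 T E v) = N * 4 ^+ Lambda * DD T0 T E v by ring.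
  lra.
have b3 : 0 <= (4 * N * Cs + 1) * DD T0 T E v by rewrite mulr_ge0 // addr_ge0 // !mulr_ge0 // ltW.
nra.
Qed.
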